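(* Let $\mathcal{X}=L^p$ for some $p\in\{0,1,\infty\}$ and let $\varphi$ be a dynamic LM-measure on $\mathcal{X}$. The following are equivalent: (1) $\varphi$ is weakly acceptance time consistent, i.e. for all $X\in\mathcal{X}$, $s,t\in\mathbb{T}$ with $s>t$, and $m_s\in\bar L^0_s$: $\varphi_s(X)\ge m_s\Rightarrow \varphi_t(X)\ge\operatorname{Essinf}_t(m_s)$; (2) for all $X\in\mathcal{X}$ and $s>t$: $\varphi_t(X)\ge\operatorname{Essinf}_t\varphi_s(X)$; (3) for all $X\in\mathcal{X}$, $s>t$ and $m_t\in\bar L^0_t$: $\varphi_s(X)\ge m_t\Rightarrow\varphi_t(X)\ge m_t$. If in addition $\varphi$ is a dynamic monetary utility measure, these are also equivalent to: (4) for all $X\in\mathcal{X}$ and $s>t$: $\varphi_s(X)\ge0\Rightarrow\varphi_t(X)\ge0$. Analogously, the following are equivalent: (1') $\varphi$ is weakly rejection time consistent, i.e. $\varphi_s(X)\le m_s\Rightarrow\varphi_t(X)\le\operatorname{Esssup}_t(m_s)$ for all $X$, $s>t$, $m_s\in\bar L^0_s$; (2') $\varphi_t(X)\le\operatorname{Esssup}_t\varphi_s(X)$ for all $X$, $s>t$; (3') $\varphi_s(X)\le m_t\Rightarrow\varphi_t(X)\le m_t$ for all $X$, $s>t$, $m_t\in\bar L^0_t$; and, if $\varphi$ is a dynamic monetary utility measure, also (4') $\varphi_s(X)\le0\Rightarrow\varphi_t(X)\le0$ for all $X$, $s>t$.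
   Context: Let $(\Omega,\mathcal{F},\{\mathcal{F}_t\}_{t\in\mathbb{T}},P)$ be a filtered probability space, $\mathbb{T}=\{0,1,\dots,T\}$, $\mathcal{F}_0$ trivial. $\bar L^0_t$ denotes $\mathcal{F}_t$-measurable random variables with values in $[-\infty,\infty]$; $L^p_t=L^p(\Omega,\mathcal{F}_t,P)$, $L^p=L^p_T$, ordered pointwise a.s. Conventions: $\infty-\infty=-\infty$, $0\cdot\pm\infty=0$. A dynamic LM-measure is a family $\{\varphi_t\}_{t\in\mathbb{T}}$ of maps $\varphi_t:\mathcal{X}\to\bar L^0_t$ with $1_A\varphi_t(X)=1_A\varphi_t(1_AX)$ for all $A\in\mathcal{F}_t$ and $X\le Y\Rightarrow\varphi_t(X)\le\varphi_t(Y)$. A dynamic monetary utility measure is a dynamic LM-measure with $\varphi_t(0)=0$ and $\varphi_t(X+c_t)=\varphi_t(X)+c_t$ for all $t\in\mathbb{T}$, $X\in\mathcal{X}$, $c_t\in L^\infty_t$. For bounded $X$, $\operatorname{Essinf}_tX$ is the largest $\mathcal{F}_t$-measurable random variable a.s. dominated by $X$ (equivalently the unique $\mathcal{F}_t$-measurable $U$ with $\operatorname{essinf}_{A}X=\operatorname{essinf}_{A}U$ for all $A\in\mathcal{F}_t$), and $\operatorname{Esssup}_tX=-\operatorname{Essinf}_t(-X)$; for $X\in\bar L^0_T$ set $\operatorname{Essinf}_tX:=\lim_{n}\operatorname{Essinf}_t(X^+\wedge n)-\lim_n\operatorname{Esssup}_t(X^-\wedge n)$ and $\operatorname{Esssup}_tX:=-\operatorname{Essinf}_t(-X)$,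 where $X^+=X\vee0$, $X^-=(-X)\vee0$. *)

(* Defs.v *)
From HB Require Import structures.
From mathcomp Require Import all_boot all_order all_algebra.
From mathcomp Require Import all_classical all_reals all_analysis measurable_realfun.
From Stdlib Require Import ClassicalEpsilon.
Set Implicit Arguments. Unset Strict Implicit. Unset Printing Implicit Defensive.
Import Order.TTheory GRing.Theory Num.Theory.
Local Open Scope classical_set_scope.
Local Open Scope ring_scope.
Local Open Scope ereal_scope.

Section Defs.
Context {R : realType} {d : measure_display} {T : measurableType d}.
Variable P : probability T R.

Definition Gmeas (G : set (set T)) (f : T -> \bar R) : Prop :=
  forall B : set (\bar R), measurable B -> G (f @^-1` B).

Definition filtration (Tend : nat) (F : nat -> set (set T)) : Prop :=
  [/\ (forall t, (t <= Tend)%N -> sigma_algebra setT (F t)),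
      (forall t, (t <= Tend)%N -> F t `<=` measurable),
      (forall s t, (s <= t)%N -> (t <= Tend)%N -> F s `<=` F t) &
      (forall A, F 0%N A -> A = set0 \/ A = setT)].

Inductive Lp_index := Lp0 | Lp1 | Lpinf.

Definition inLp (G : set (set T)) (p : Lp_index) (X : T -> R) : Prop :=
  Gmeas G (fun w => (X w)%:E) /\
  match p with
  | Lp0 => True
  | Lp1 => P.-integrable setT (fun w => (X w)%:E)
  | Lpinf => exists C : R, {ae P, forall w, (`|X w| <= C)%R}
  end.

Definition is_EssinfB (G : set (set T)) (X U : T -> \bar R) : Prop :=
  [/\ Gmeas G U, {ae P, forall w, U w <= X w} &
      forall V, Gmeas G V -> {ae P, forall w, V w <= X w} ->
        {ae P, forall w, V w <= U w}].

Definition EssinfB (G : set (set T)) (X : T -> \bar R) : T -> \bar R :=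
  epsilon (inhabits (fun _ => -oo)) (is_EssinfB G X).

Definition EsssupB (G : set (set T)) (X : T -> \bar R) : T -> \bar R :=
  fun w => - EssinfB G (fun v => - X v) w.

(** General extended-valued X:
    Essinf X := lim_n Essinf (X^+ ∧ n) - lim_n Esssup (X^- ∧ n)
    (with the MathComp convention +oo - +oo = -oo). *)
Definition Essinf (G : set (set T)) (X : T -> \bar R) : T -> \bar R :=
  fun w =>
    limn (fun n : nat => EssinfB G (fun v => mine (maxe (X v) 0) n%:R%:E) w)
    - limn (fun n : nat => EsssupB G (fun v => mine (maxe (- X v) 0) n%:R%:E) w).

Definition Esssup (G : set (set T)) (X : T -> \bar R) : T -> \bar R :=
  fun w => - Essinf G (fun v => - X v) w.

(** Dynamic LM-measure on X = L^p(F_Tend) (values outside X are irrelevant). *)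
Definition dynamic_LM (Tend : nat) (F : nat -> set (set T)) (p : Lp_index)
  (phi : nat -> (T -> R) -> (T -> \bar R)) : Prop :=
  [/\ (forall t X, (t <= Tend)%N -> inLp (F Tend) p X -> Gmeas (F t) (phi t X)),
      (forall t A X, (t <= Tend)%N -> F t A -> inLp (F Tend) p X ->
         {ae P, forall w, (\1_A w)%:E * phi t X w =
                          (\1_A w)%:E * phi t (fun v => \1_A v * X v)%R w}) &
      (forall t X Y, (t <= Tend)%N -> inLp (F Tend) p X -> inLp (F Tend) p Y ->
         {ae P, forall w, (X w <= Y w)%R} ->
         {ae P, forall w, phi t X w <= phi t Y w})].

Definition dynamic_MUM (Tend : nat) (F : nat -> set (set T)) (p : Lp_index)
  (phi : nat -> (T -> R) -> (T -> \bar R)) : Prop :=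
  [/\ dynamic_LM Tend F p phi,
      (forall t, (t <= Tend)%N -> {ae P, forall w, phi t (fun _ => 0%R) w = 0}) &
      (forall t X c, (t <= Tend)%N -> inLp (F Tend) p X -> inLp (F t) Lpinf c ->
         {ae P, forall w, phi t (fun v => X v + c v)%R w = phi t X w + (c w)%:E})].

Definition cond1 Tend F p (phi : nat -> (T -> R) -> (T -> \bar R)) : Prop :=
  forall X s t (m : T -> \bar R), inLp (F Tend) p X -> (t < s)%N -> (s <= Tend)%N ->
    Gmeas (F s) m -> {ae P, forall w, phi s X w >= m w} ->
    {ae P, forall w, phi t X w >= Essinf (F t) m w}.
Definition cond2 Tend F p (phi : nat -> (T -> R) -> (T -> \bar R)) : Prop :=
  forall X s t, inLp (F Tend) p X -> (t < s)%N -> (s <= Tend)%N ->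
    {ae P, forall w, phi t X w >= Essinf (F t) (phi s X) w}.
Definition cond3 Tend F p (phi : nat -> (T -> R) -> (T -> \bar R)) : Prop :=
  forall X s t (m : T -> \bar R), inLp (F Tend) p X -> (t < s)%N -> (s <= Tend)%N ->
    Gmeas (F t) m -> {ae P, forall w, phi s X w >= m w} ->
    {ae P, forall w, phi t X w >= m w}.
Definition cond4 Tend (F : nat -> set (set T)) p
  (phi : nat -> (T -> R) -> (T -> \bar R)) : Prop :=
  forall X s t, inLp (F Tend) p X -> (t < s)%N -> (s <= Tend)%N ->
    {ae P, forall w, phi s X w >= 0} -> {ae P, forall w, phi t X w >= 0}.

Definition cond1' Tend F p (phi : nat -> (T -> R) -> (T -> \bar R)) : Prop :=
  forall X s t (m : T -> \bar R), inLp (F Tend) p X -> (t < s)%N -> (s <= Tend)%N ->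
    Gmeas (F s) m -> {ae P, forall w, phi s X w <= m w} ->
    {ae P, forall w, phi t X w <= Esssup (F t) m w}.
Definition cond2' Tend F p (phi : nat -> (T -> R) -> (T -> \bar R)) : Prop :=
  forall X s t, inLp (F Tend) p X -> (t < s)%N -> (s <= Tend)%N ->
    {ae P, forall w, phi t X w <= Esssup (F t) (phi s X) w}.
Definition cond3' Tend F p (phi : nat -> (T -> R) -> (T -> \bar R)) : Prop :=
  forall X s t (m : T -> \bar R), inLp (F Tend) p X -> (t < s)%N -> (s <= Tend)%N ->
    Gmeas (F t) m -> {ae P, forall w, phi s X w <= m w} ->
    {ae P, forall w, phi t X w <= m w}.
Definition cond4' Tend (F : nat -> set (set T)) p
  (phi : nat -> (T -> R) -> (T -> \bar R)) : Prop :=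
  forall X s t, inLp (F Tend) p X -> (t < s)%N -> (s <= Tend)%N ->
    {ae P, forall w, phi s X w <= 0} -> {ae P, forall w, phi t X w <= 0}.

End Defs.

(* Main.v *)
Require Import Defs.
From HB Require Import structures.
From mathcomp Require Import all_boot all_order all_algebra.
From mathcomp Require Import all_classical all_reals all_analysis measurable_realfun.
From Stdlib Require Import ClassicalEpsilon.
From mathcomp Require Import lra.
Set Implicit Arguments. Unset Strict Implicit. Unset Printing Implicit Defensive.
Import Order.TTheory GRing.Theory Num.Theory.
Local Open Scope classical_set_scope.
Local Open Scope ring_scope.
Local Open Scope ereal_scope.

Section Ess.
Context {R : realType} {d : measure_display} {T : measurableType d}.
Variable P : probability T R.

Lemma aeS (A B : T -> Prop) : (forall w, A w -> B w) ->
  {ae P, forall w, A w} -> {ae P, forall w, B w}.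
Proof. by move=> h; apply: filterS. Qed.

Lemma ae2 (A B C : T -> Prop) : (forall w, A w -> B w -> C w) ->
  {ae P, forall w, A w} -> {ae P, forall w, B w} -> {ae P, forall w, C w}.
Proof. by move=> h; apply: filterS2. Qed.

Lemma aeT (A : T -> Prop) : (forall w, A w) -> {ae P, forall w, A w}.
Proof. by move=> h; apply: nearW. Qed.

Lemma aeN (A : nat -> T -> Prop) : (forall n, {ae P, forall w, A n w}) ->
  {ae P, forall w, forall n, A n w}.
Proof. exact: ae_foralln. Qed.

Lemma max_set (S : set (set T)) : (forall A, S A -> measurable A) -> S set0 ->
  (forall F : (set T)^nat, (forall n, S (F n)) -> S (\bigcup_n F n)) ->
  exists2 A, S A & forall B, S B -> P (B `\` A) = 0.
Proof.
move=> Sm S0 SU.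
set s := ereal_sup [set P A | A in S].
have SN0 : [set P A | A in S] != set0 by apply/set0P; exists (P set0), set0.
have [u Su cu] := ereal_sup_seq SN0.
have /choice[F HF] : forall i, exists A, S A /\ P A = u i.
  by move=> i; have [A SA <-] := Su i; exists A.
set A := \bigcup_n F n.
have SA : S A by apply: SU => n; case: (HF n).
have mA : measurable A by exact: Sm.
have PAs : P A = s.
  apply/eqP; rewrite eq_le; apply/andP; split.
    by apply: ereal_sup_ubound; exists A.
  rewrite /s -(cvg_lim _ cu) //; apply: lime_le; first by apply/cvg_ex; exists s.
  apply: nearW => n; case: (HF n) => SFn <-.
  by apply: le_measure; rewrite ?inE //; [exact: Sm|exact: bigcup_sup].
exists A => // B SB.
have mB : measurable B by exact: Sm.
have SAB : S (A `|` B).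
  have -> : A `|` B = \bigcup_n (if n is 0 then A else B).
    apply/seteqP; split=> x.
      by case=> h; [exists 0%N|exists 1%N].
    by case=> -[|n] _ h; [left|right].
  by apply: SU => -[|n].
have le1 : P (A `|` B) <= s by apply: ereal_sup_ubound; exists (A `|` B).
have : P (A `|` B) = P A + P (B `\` A).
  rewrite -measureU //; last 2 first.
  - exact: measurableD.
  - by apply/seteqP; split=> x // [Ax [_ nAx]].
  congr (P _); apply/seteqP; split=> x /=.
    by case: (pselect (A x)) => hA [h|h]; [left|left|left|right].
  by case=> [h|[h _]]; [left|right].
move: le1; rewrite -PAs => le1 eq1.
have fA : P A \is a fin_num by rewrite ge0_fin_numE // (le_lt_trans (probability_le1 _ mA)) // ltry.
apply/eqP; rewrite eq_le measure_ge0 andbT.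
by rewrite -(leeD2lE _ _ fA) adde0 -eq1.
Qed.
Section GS.
Variable G : set (set T).
Hypothesis sG : sigma_algebra setT G.

Lemma GmeasP (f : T -> \bar R) :
  Gmeas G f <-> measurable_fun (setT : set (g_sigma_algebraType G)) f.
Proof.
rewrite /Gmeas; split=> h.
  move=> _ B mB; rewrite setTI.
  by rewrite (measurable_g_measurableTypeE sG); apply: h.
move=> B mB; have := h measurableT B mB; rewrite setTI.
by rewrite (measurable_g_measurableTypeE sG).
Qed.

End GS.
End Ess.

Section E.
Context {R : realType}.
Definition rr (k : nat) : R := ratr (odflt 0%Q (unpickle k)).

Lemma rr_dense (x y : \bar R) : x < y -> exists k, x < (rr k)%:E < y.
Proof.
have H (a b : R) : (a < b)%R -> exists k, ((a < rr k) && (rr k < b))%R.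
  move=> /rat_in_itvoo[q]; rewrite in_itv /= => hq.
  by exists (pickle q); rewrite /rr pickleK.
case: x => [a| |]; case: y => [b| |] //=.
- by rewrite lte_fin => /H[k hk]; exists k; rewrite !lte_fin.
- move=> _; have [k hk] := H a (a + 1)%R ltac:(by rewrite ltrDl); exists k.
  by rewrite lte_fin ltry; case/andP: hk => ->.
- move=> _; have [k hk] := H (b - 1)%R b ltac:(by rewrite gtrBl); exists k.
  by rewrite lte_fin ltNyr; case/andP: hk => _ ->.
- move=> _; have [k hk] := H 0%R 1%R ltr01; exists k.
  by rewrite ltry ltNyr.
Qed.
Context {d : measure_display} {T : measurableType d}.
Variable P : probability T R.
Variable G : set (set T).
Hypothesis sG : sigma_algebra setT G.
Hypothesis GP : G `<=` measurable.

Lemma G_bigcup (F : (set T)^nat) : (forall n, G (F n)) -> G (\bigcup_n F n).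
Proof. by case: sG => _ _; apply. Qed.

Lemma G0 : G set0. Proof. by case: sG. Qed.

Lemma EssinfB_exists (X : T -> \bar R) : exists U, is_EssinfB P G X U.
Proof.
pose S k := [set A | G A /\ {ae P, forall w, A w -> (rr k)%:E <= X w}].
have /choice[A HA] : forall k, exists A, S k A /\ forall B, S k B -> P (B `\` A) = 0.
  move=> k; have [|||A SA HA] := @max_set _ _ _ P (S k).
  - by move=> A [/GP].
  - by split; [exact: G0|apply: aeT].
  - move=> F HF; split; first by apply: G_bigcup => n; case: (HF n).
    apply: aeS (aeN (fun n => (HF n).2)) => w h [n _ Fn]; exact: (h n Fn).
  by exists A.
pose u k w := if `[< A k w >] then (rr k)%:E else -oo.
pose U w := esups (u ^~ w) 0%N.
have Uge k w : A k w -> (rr k)%:E <= U w.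
  move=> Akw; apply: ereal_sup_ubound; exists k => //.
  by rewrite /u asboolT.
exists U; split.
- apply/(GmeasP sG); apply: measurable_fun_esups => k.
  apply: measurable_fun_ifT => //.
  apply: (measurable_fun_bool true); rewrite setTI.
  rewrite (_ : _ @^-1` _ = A k); last first.
    by apply/seteqP; split=> w /=; move/asboolP.
  by apply: sub_sigma_algebra; case: (HA k) => -[].
- apply: aeS (aeN (fun k => (HA k).1.2)) => w h.
  apply: ge_ereal_sup => _ [k _ <-]; rewrite /u.
  case: (pselect (A k w)) => hk; first by rewrite asboolT //; exact: h.
  by rewrite asboolF // leNye.
- move=> V mV VX.
  have hk k : {ae P, forall w, (rr k)%:E <= V w -> A k w}.
    have mB : G [set w | (rr k)%:E <= V w].
      have := mV `[(rr k)%:E, +oo[%classic (emeasurable_itv _).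
      by congr G; apply/seteqP; split=> w /=; rewrite in_itv /= andbT.
    have := (HA k).2 _ (conj mB (aeS (fun w h1 h2 => le_trans h2 h1) VX)).
    move=> P0; exists ([set w | (rr k)%:E <= V w] `\` A k); split.
    + by apply: measurableD; apply: GP => //; case: (HA k) => -[].
    + exact: P0.
    + by move=> w /= /not_implyP.
  apply: aeS (aeN hk) => w h.
  rewrite leNgt; apply/negP => /rr_dense[k /andP[k1 k2]].
  have := Uge k w (h k (ltW k2)).
  by rewrite leNgt k1.
Qed.

Lemma EssinfBP X : is_EssinfB P G X (EssinfB P G X).
Proof. by rewrite /EssinfB; apply: epsilon_spec; exact: EssinfB_exists. Qed.

Lemma GmeasN (f : T -> \bar R) : Gmeas G f -> Gmeas G (fun w => - f w).
Proof.
move=> /(GmeasP sG) mf; apply/(GmeasP sG).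
exact: measurableT_comp mf.
Qed.

Lemma Gmeas_clip (f : T -> \bar R) (n : nat) : Gmeas G f ->
  Gmeas G (fun w => mine (maxe (f w) 0) n%:R%:E).
Proof.
move=> /(GmeasP sG) mf; apply/(GmeasP sG).
by apply: measurable_mine => //; apply: measurable_maxe.
Qed.

Lemma EB_mono (X Y : T -> \bar R) : (forall w, X w <= Y w) ->
  {ae P, forall w, EssinfB P G X w <= EssinfB P G Y w}.
Proof.
move=> XY; have [m1 l1 _] := EssinfBP X; have [_ _ h2] := EssinfBP Y.
by apply: h2 => //; apply: aeS l1 => w h; exact: le_trans h (XY w).
Qed.

Lemma mono_lim (u : (\bar R)^nat) : (forall n, u n <= u n.+1) ->
  limn u = ereal_sup (range u).
Proof.
by move=> h; apply/cvg_lim => //; apply: ereal_nondecreasing_cvgn; apply/nondecreasing_seqP.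
Qed.

Lemma le_natE (z : \bar R) : (forall n : nat, n%:R%:E <= z) -> z = +oo.
Proof.
case: z => [r| |] h //.
  have := h (Num.truncn r).+1; rewrite lee_fin => /(lt_le_trans (Num.Theory.truncnS_gt r)).
  by rewrite ltxx.
by have := h 0%N; rewrite leeNy_eq.
Qed.

Lemma min_nat_le (x z : \bar R) : 0 <= x ->
  (forall n : nat, mine x n%:R%:E <= z) -> x <= z.
Proof.
case: x => [r| |] // r0 h.
  have := h (Num.truncn r).+1; rewrite /mine lte_fin (Num.Theory.truncnS_gt r) //.
rewrite (le_natE (z:=z)) ?leey // => n.
Qed.

Definition ap (Y : T -> \bar R) n w :=
  EssinfB P G (fun v => mine (maxe (Y v) 0) n%:R%:E) w.
Definition bp (Y : T -> \bar R) n w :=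
  EsssupB P G (fun v => mine (maxe (- Y v) 0) n%:R%:E) w.

Lemma EssinfE Y w :
  Essinf P G Y w = limn (fun n => ap Y n w) - limn (fun n => bp Y n w).
Proof. by []. Qed.

Lemma posneg (x : \bar R) : x = maxe x 0 - maxe (- x) 0.
Proof.
case: x => [r| |] /=.
- have [r0|r0] := leP 0%R r.
    have e1 : maxe r%:E 0 = r%:E by apply: max_l; rewrite lee_fin.
    have e2 : maxe (- r%:E) 0 = 0 by apply: max_r; rewrite -EFinN lee_fin; lra.
    by rewrite e1 e2 sube0.
  have e1 : maxe r%:E 0 = 0 by apply: max_r; rewrite lee_fin; lra.
  have e2 : maxe (- r%:E) 0 = - r%:E by apply: max_l; rewrite -EFinN lee_fin; lra.
  by rewrite e1 e2 sub0e oppeK.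
- have e1 : maxe +oo 0 = +oo :> \bar R by apply: max_l; rewrite leey.
  have e2 : maxe (- +oo) 0 = 0 :> \bar R by apply: max_r; rewrite leNye.
  by rewrite e1 e2 sube0.
- have e1 : maxe -oo 0 = 0 :> \bar R by apply: max_r; rewrite leNye.
  have e2 : maxe +oo 0 = +oo :> \bar R by apply: max_l; rewrite leey.
  by rewrite e1 add0e.
Qed.

Lemma ab_good Y : {ae P, forall w,
  (forall n, ap Y n w <= ap Y n.+1 w) /\ (forall n, bp Y n w <= bp Y n.+1 w) /\
  (forall n, ap Y n w <= mine (maxe (Y w) 0) n%:R%:E) /\
  (forall n, mine (maxe (- Y w) 0) n%:R%:E <= bp Y n w)}.
Proof.
have h1 : {ae P, forall w, forall n, ap Y n w <= ap Y n.+1 w}.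
  apply: aeN => n; apply: EB_mono => w; apply: le_min2 => //.
  by rewrite lee_fin ler_nat.
have h2 : {ae P, forall w, forall n, bp Y n w <= bp Y n.+1 w}.
  apply: aeN => n.
  have := @EB_mono (fun v => - mine (maxe (- Y v) 0) n.+1%:R%:E)
     (fun v => - mine (maxe (- Y v) 0) n%:R%:E).
  move=> /(_ _)/aeS; apply.
    by move=> w h; rewrite /bp /EsssupB leeN2.
  by move=> w; rewrite leeN2; apply: le_min2 => //; rewrite lee_fin ler_nat.
have h3 : {ae P, forall w, forall n, ap Y n w <= mine (maxe (Y w) 0) n%:R%:E}.
  by apply: aeN => n; case: (EssinfBP (fun v => mine (maxe (Y v) 0) n%:R%:E)).
have h4 : {ae P, forall w, forall n, mine (maxe (- Y w) 0) n%:R%:E <= bp Y n w}.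
  apply: aeN => n; case: (EssinfBP (fun v => - mine (maxe (- Y v) 0) n%:R%:E)) => _ h _.
  by apply: aeS h => w h; rewrite /bp /EsssupB leeNr.
have h12 := ae2 (fun w (a : forall n, ap Y n w <= ap Y n.+1 w) (b : forall n, bp Y n w <= bp Y n.+1 w) => conj a b) h1 h2.
have h34 := ae2 (fun w (a : forall n, ap Y n w <= mine (maxe (Y w) 0) n%:R%:E) (b : forall n, mine (maxe (- Y w) 0) n%:R%:E <= bp Y n w) => conj a b) h3 h4.
by apply: ae2 h12 h34 => w [a b] [c e].
Qed.

Lemma limn_sup (u : (\bar R)^nat) : (forall n, u n <= u n.+1) ->
  (forall n, u n <= limn u) /\ (forall M, (forall n, u n <= M) -> limn u <= M).
Proof.
move=> h; rewrite mono_lim //; split.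
  by move=> n; apply: ereal_sup_ubound; exists n.
by move=> M hM; apply: ge_ereal_sup => _ [n _ <-].
Qed.

Lemma clip_le (x : \bar R) (n : nat) : mine (maxe x 0) n%:R%:E <= maxe x 0.
Proof. by rewrite ge_min lexx. Qed.

Lemma Essinf_ge (m Y : T -> \bar R) : Gmeas G m ->
  {ae P, forall w, m w <= Y w} -> {ae P, forall w, m w <= Essinf P G Y w}.
Proof.
move=> mm mY.
have ha : {ae P, forall w, forall n, mine (maxe (m w) 0) n%:R%:E <= ap Y n w}.
  apply: aeN => n; case: (EssinfBP (fun v => mine (maxe (Y v) 0) n%:R%:E)) => _ _.
  apply; first exact: Gmeas_clip.
  by apply: aeS mY => w h; apply: le_min2 => //; apply: le_max2.
have hb : {ae P, forall w, forall n, bp Y n w <= mine (maxe (- m w) 0) n%:R%:E}.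
  apply: aeN => n; case: (EssinfBP (fun v => - mine (maxe (- Y v) 0) n%:R%:E)) => _ _.
  move/(_ (fun v => - mine (maxe (- m v) 0) n%:R%:E)).
  move=> /(_ (GmeasN (Gmeas_clip n (GmeasN mm)))) h.
  have : {ae P, forall w, - mine (maxe (- m w) 0) n%:R%:E <= - mine (maxe (- Y w) 0) n%:R%:E}.
    apply: aeS mY => w h1; rewrite leeN2; apply: le_min2 => //; apply: le_max2 => //.
    by rewrite leeN2.
  by move/h; apply: aeS => w h2; rewrite /bp /EsssupB leeNl.
apply: ae2 (ae2 (fun w a b => conj a b) ha hb) (ab_good Y) => w [ha' hb'] [a1 [b1 _]].
rewrite EssinfE (posneg (m w)); apply: leeB.
  have [la _] := limn_sup a1.
  apply: min_nat_le; first by rewrite le_max lexx orbT.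
  by move=> n; apply: le_trans (ha' n) (la n).
have [_ lb] := limn_sup b1.
by apply: lb => n; apply: le_trans (hb' n) (clip_le _ _).
Qed.

Lemma Essinf_ver (Y : T -> \bar R) : exists m',
  [/\ Gmeas G m', {ae P, forall w, Essinf P G Y w = m' w} &
      {ae P, forall w, Essinf P G Y w <= Y w}].
Proof.
exists (fun w => limn_esup (fun n => ap Y n w) + - limn_esup (fun n => bp Y n w)).
split.
- apply/(GmeasP sG).
  apply: emeasurable_funD.
    apply: measurable_fun_limn_esup => n.
    by apply/(GmeasP sG); case: (EssinfBP (fun v => mine (maxe (Y v) 0) n%:R%:E)).
  apply: measurableT_comp => //.
  apply: measurable_fun_limn_esup => n.
  apply/(GmeasP sG); apply: GmeasN.
  by case: (EssinfBP (fun v => - mine (maxe (- Y v) 0) n%:R%:E)).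
- apply: aeS (ab_good Y) => w [a1 [b1 _]].
  rewrite EssinfE !is_cvg_limn_esupE //; apply: ereal_nondecreasing_is_cvgn;
    exact/nondecreasing_seqP.
- apply: aeS (ab_good Y) => w [a1 [b1 [a2 b2]]].
  rewrite EssinfE [leRHS](posneg (Y w)); apply: leeB.
    have [_ la] := limn_sup a1.
    by apply: la => n; apply: le_trans (a2 n) (clip_le _ _).
  have [lb _] := limn_sup b1.
  apply: min_nat_le; first by rewrite le_max lexx orbT.
  by move=> n; apply: le_trans (b2 n) (lb n).
Qed.
End E.

Section C.
Context {R : realType} {d : measure_display} {T : measurableType d}.
Variable P : probability T R.
Variables (Tend : nat) (F : nat -> set (set T)) (p : Lp_index).
Hypothesis hF : filtration Tend F.

Lemma FsG t : (t <= Tend)%N -> sigma_algebra setT (F t).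
Proof. by case: hF => h _ _ _; apply: h. Qed.
Lemma FGP t : (t <= Tend)%N -> F t `<=` measurable.
Proof. by case: hF => _ h _ _; apply: h. Qed.

Lemma cond123 (f : nat -> (T -> R) -> (T -> \bar R)) :
  (forall X s, inLp P (F Tend) p X -> (s <= Tend)%N -> Gmeas (F s) (f s X)) ->
  (cond1 P Tend F p f <-> cond2 P Tend F p f) /\
  (cond2 P Tend F p f <-> cond3 P Tend F p f).
Proof.
move=> fm.
have c12 : cond1 P Tend F p f -> cond2 P Tend F p f.
  move=> h1 X s t hX ts sT; apply: (h1 X s t (f s X)) => //; first exact: fm.
  exact: aeT.
have c23 : cond2 P Tend F p f -> cond3 P Tend F p f.
  move=> h2 X s t m hX ts sT mm hm.
  have tT : (t <= Tend)%N by apply: ltnW (leq_trans ts sT).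
  have := Essinf_ge (FsG tT) (FGP tT) mm hm.
  by apply: ae2 (h2 X s t hX ts sT) => w h h'; apply: le_trans h' h.
have c31 : cond3 P Tend F p f -> cond1 P Tend F p f.
  move=> h3 X s t m hX ts sT mm hm.
  have tT : (t <= Tend)%N by apply: ltnW (leq_trans ts sT).
  have [m' [mm' e' le']] := Essinf_ver P (FsG tT) (FGP tT) m.
  have hm' : {ae P, forall w, m' w <= f s X w}.
    apply: ae2 (ae2 (fun w a b => conj a b) e' le') hm => w [a b] c.
    by rewrite -a; apply: le_trans b c.
  have := h3 X s t m' hX ts sT mm' hm'.
  by apply: ae2 e' => w a b; rewrite a.
split; split => h.
- exact: c12.
- exact: c31 (c23 h).
- exact: c23.
- exact: c12 (c31 h).
Qed.

Lemma prime123 (f : nat -> (T -> R) -> (T -> \bar R)) :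
  let g := fun s X w => - f s X w in
  (cond1' P Tend F p f <-> cond1 P Tend F p g) /\
  (cond2' P Tend F p f <-> cond2 P Tend F p g) /\
  (cond3' P Tend F p f <-> cond3 P Tend F p g).
Proof.
move=> g.
have mNN (m : T -> \bar R) : (fun v => - - m v) = m by apply: funext => v; rewrite oppeK.
split; [|split]; split.
- move=> h X s t m hX ts sT mm hm.
  have := h X s t (fun w => - m w) hX ts sT (GmeasN (FsG sT) mm).
  have hm' : {ae P, forall w, f s X w <= - m w} by apply: aeS hm => w; rewrite leeNr.
  move=> /(_ hm').
  by apply: aeS => w; rewrite /Esssup mNN leeNr.
- move=> h X s t m hX ts sT mm hm.
  have := h X s t (fun w => - m w) hX ts sT (GmeasN (FsG sT) mm).
  have hm' : {ae P, forall w, - m w <= g s X w} by apply: aeS hm => w; rewrite /g leeN2.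
  move=> /(_ hm').
  by apply: aeS => w; rewrite /Esssup leeNr.
- move=> h X s t hX ts sT; apply: aeS (h X s t hX ts sT) => w.
  by rewrite /Esssup leeNr /g.
- move=> h X s t hX ts sT; apply: aeS (h X s t hX ts sT) => w.
  by rewrite /Esssup leeNr /g.
- move=> h X s t m hX ts sT mm hm.
  have tT : (t <= Tend)%N by apply: ltnW (leq_trans ts sT).
  have := h X s t (fun w => - m w) hX ts sT (GmeasN (FsG tT) mm).
  have hm' : {ae P, forall w, f s X w <= - m w} by apply: aeS hm => w; rewrite leeNr.
  move=> /(_ hm').
  by apply: aeS => w; rewrite leeNr.
- move=> h X s t m hX ts sT mm hm.
  have tT : (t <= Tend)%N by apply: ltnW (leq_trans ts sT).
  have := h X s t (fun w => - m w) hX ts sT (GmeasN (FsG tT) mm).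
  have hm' : {ae P, forall w, - m w <= g s X w} by apply: aeS hm => w; rewrite /g leeN2.
  move=> /(_ hm').
  by apply: aeS => w; rewrite /g leeN2.
Qed.
End C.

Section D.
Context {R : realType} {d : measure_display} {T : measurableType d}.
Variable P : probability T R.
Variables (Tend : nat) (F : nat -> set (set T)) (p : Lp_index).
Hypothesis hF : filtration Tend F.

Lemma GmeasR G (sG : sigma_algebra setT G) (h : T -> R) :
  Gmeas G (fun w => (h w)%:E) <-> measurable_fun (setT : set (g_sigma_algebraType G)) h.
Proof. by rewrite (GmeasP sG); exact: measurable_EFinP. Qed.

Lemma Fmono s t : (s <= t)%N -> (t <= Tend)%N -> F s `<=` F t.
Proof. by case: hF => _ _ h _; apply: h. Qed.

Lemma Gmeas_mono G G' (f : T -> \bar R) : G `<=` G' -> Gmeas G f -> Gmeas G' f.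
Proof. by move=> GG h B mB; apply: GG; apply: h. Qed.

Lemma Gmeas_T G (f : T -> \bar R) : G `<=` measurable -> Gmeas G f ->
  measurable_fun setT f.
Proof. by move=> GP h _ B mB; rewrite setTI; apply: GP; apply: h. Qed.

Lemma inLp_indic t A X : (t <= Tend)%N -> F t A -> inLp P (F Tend) p X ->
  inLp P (F Tend) p (fun v => \1_A v * X v)%R.
Proof.
move=> tT FA [mX hX].
have sT := FsG hF (leqnn Tend).
have mZ : Gmeas (F Tend) (fun w => (\1_A w * X w)%R%:E).
  apply/(GmeasR sT); apply: measurable_funM; last exact/(GmeasR sT).
  apply: measurable_indic; apply: sub_sigma_algebra; exact: (Fmono tT (leqnn _)).
have le w : (`|\1_A w * X w| <= `|X w|)%R.
  rewrite normrM ler_piMl // indicE; case: (_ \in _); rewrite normr_nat //.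
split=> //; case: p hX => // [hX|[C hC]].
  apply: le_integrable hX => //; first exact: Gmeas_T (FGP hF (leqnn _)) mZ.
  by move=> w _; rewrite !abse_EFin lee_fin; exact: le.
exists C; apply: aeS hC => w h; exact: le_trans (le w) h.
Qed.

Lemma aeI (A B : T -> Prop) : {ae P, forall w, A w} -> {ae P, forall w, B w} ->
  {ae P, forall w, A w /\ B w}.
Proof. exact: ae2. Qed.

Lemma inLp_bdd G (c : T -> R) C : Gmeas G (fun w => (c w)%:E) ->
  (forall w, (`|c w| <= C)%R) -> inLp P G Lpinf c.
Proof. by move=> m h; split=> //; exists C; apply: aeT. Qed.

Lemma inLp_add Z (c : T -> R) C : inLp P (F Tend) p Z ->
  Gmeas (F Tend) (fun w => (c w)%:E) -> (forall w, (`|c w| <= C)%R) ->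
  inLp P (F Tend) p (fun v => Z v + c v)%R.
Proof.
move=> [mZ hZ] mc bc.
have sT := FsG hF (leqnn Tend).
have mS : Gmeas (F Tend) (fun w => (Z w + c w)%R%:E).
  by apply/(GmeasR sT); apply: measurable_funD; apply/(GmeasR sT).
split=> //; case: p hZ => // [hZ|[C1 hC1]].
  rewrite (_ : (fun w => _) = (fun w => (Z w)%:E) \+ (fun w => (c w)%:E)); last first.
    by apply: funext => w; rewrite EFinD.
  apply: (integrableD measurableT) => //; apply: (le_integrable measurableT (g := EFin \o cst C)).
  - exact: Gmeas_T (FGP hF (leqnn _)) mc.
  - by move=> w _ /=; rewrite lee_fin; apply: le_trans (bc w) (ler_norm _).
  - exact: finite_measure_integrable_cst.
exists (C1 + C)%R; apply: aeS hC1 => w h.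
by apply: le_trans (ler_normD _ _) _; apply: lerD.
Qed.

Section hard.
Variable f : nat -> (T -> R) -> (T -> \bar R).
Hypothesis Hloc : forall t A X, (t <= Tend)%N -> F t A -> inLp P (F Tend) p X ->
  {ae P, forall w, (\1_A w)%:E * f t X w =
                   (\1_A w)%:E * f t (fun v => \1_A v * X v)%R w}.
Hypothesis Hzero : forall t, (t <= Tend)%N -> {ae P, forall w, f t (fun _ => 0%R) w = 0}.
Hypothesis Hcash : forall t X c, (t <= Tend)%N -> inLp P (F Tend) p X -> inLp P (F t) Lpinf c ->
  {ae P, forall w, f t (fun v => X v + c v)%R w = f t X w + (c w)%:E}.
Hypothesis H4 : cond4 P Tend F p f.

Lemma indic1 (A : set T) w : A w -> \1_A w = 1%R :> R.
Proof. by move=> h; rewrite indicE mem_set. Qed.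
Lemma indic0 (A : set T) w : ~ A w -> \1_A w = 0%R :> R.
Proof. by move=> h; rewrite indicE memNset. Qed.

Lemma Lstep X s t A (c : T -> R) C : inLp P (F Tend) p X -> (t < s)%N -> (s <= Tend)%N ->
  F t A -> Gmeas (F t) (fun w => (c w)%:E) -> (forall w, (`|c w| <= C)%R) ->
  {ae P, forall w, A w -> (c w)%:E <= f s X w} ->
  {ae P, forall w, A w -> (c w)%:E <= f t X w}.
Proof.
move=> hX ts sT FA mc bc hc.
have tT : (t <= Tend)%N by apply: ltnW (leq_trans ts sT).
have FAs : F s A by apply: Fmono FA => //; exact: ltnW.
have FAc : F s (~` A).
  by have [_ h _] := FsG hF sT; rewrite -setTD; apply: h.
pose Z := fun v => (\1_A v * X v)%R.
have hZ : inLp P (F Tend) p Z by exact: inLp_indic tT FA hX.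
pose cm := fun v => (- (\1_A v * c v))%R.
have bcm w : (`|cm w| <= C)%R.
  rewrite /cm normrN normrM; apply: le_trans (bc w).
  by rewrite ler_piMl // indicE; case: (_ \in _); rewrite normr_nat.
have mcm : Gmeas (F t) (fun w => (cm w)%:E).
  have st := FsG hF tT.
  apply/(GmeasR st); apply: measurable_funN; apply: measurable_funM.
    by apply: measurable_indic; apply: sub_sigma_algebra.
  exact/(GmeasR st).
have hcm_s : inLp P (F s) Lpinf cm.
  by apply: inLp_bdd bcm; apply: Gmeas_mono mcm; apply: Fmono => //; exact: ltnW.
have hcm_t : inLp P (F t) Lpinf cm by exact: inLp_bdd bcm.
have hY : inLp P (F Tend) p (fun v => Z v + cm v)%R.
  by apply: inLp_add hZ _ bcm; apply: Gmeas_mono mcm; apply: Fmono.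
have Z0 : (fun v => \1_(~` A) v * Z v)%R = (fun _ => 0%R).
  apply: funext => v; rewrite /Z; case: (pselect (A v)) => h.
    by rewrite (indic0 (A := ~` A)) ?mul0r // => /(_ h).
  by rewrite (indic0 h) mul0r mulr0.
have e3 := Hloc sT FAc hZ; rewrite Z0 in e3.
have pos : {ae P, forall w, 0 <= f s (fun v => Z v + cm v)%R w}.
  apply: aeS (aeI (aeI (Hcash sT hZ hcm_s) (Hloc sT FAs hX))
                  (aeI (aeI e3 (Hzero sT)) hc)) => w [[e1 e2] [[e3' e4] h]].
  rewrite e1; case: (pselect (A w)) => hA.
    move: e2; rewrite (indic1 hA) !mul1e => <-.
    rewrite /cm (indic1 hA) mul1r EFinN sube_ge0 ?fin_numE //; exact: h.
  move: e3'; rewrite (indic1 (A := ~` A) hA) !mul1e e4 => ->.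
  by rewrite /cm (indic0 hA) mul0r oppr0 adde0.
have := H4 hY ts sT pos.
apply: ae2 (aeI (Hcash tT hZ hcm_t) (Hloc tT FA hX)) => w [e1 e2] h hA.
move: h; rewrite e1; move: e2; rewrite (indic1 hA) !mul1e => ->.
by rewrite /cm (indic1 hA) mul1r EFinN sube_ge0 ?fin_numE.
Qed.

Lemma c43 : cond3 P Tend F p f.
Proof.
move=> X s t m hX ts sT mm hm.
have tT : (t <= Tend)%N by apply: ltnW (leq_trans ts sT).
have st := FsG hF tT.
pose An (n : nat) := [set w | (- n%:R)%:E <= m w <= n%:R%:E].
have FAn n : F t (An n).
  have := mm `[(- n%:R)%:E, n%:R%:E]%classic (emeasurable_itv _).
  by congr (F t); apply/seteqP; split=> w /=; rewrite in_itv.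
pose cn (n : nat) w := (fine (m w) * \1_(An n) w)%R.
have H1 n : {ae P, forall w, An n w -> (cn n w)%:E <= f t X w}.
  apply: (@Lstep X s t (An n) (cn n) n%:R) => //.
  - apply/(GmeasR st); apply: measurable_funM.
      by apply: measurableT_comp => //; apply/(GmeasP st).
    by apply: measurable_indic; apply: sub_sigma_algebra.
  - move=> w; rewrite /cn; case: (pselect (An n w)) => h; last first.
      by rewrite (indic0 h) mulr0 normr0.
    rewrite (indic1 h) mulr1; move: h; rewrite /An /=.
    case: (m w) => [r| |] /=; last 2 first.
    + by rewrite normr0.
    + by rewrite normr0.
    rewrite !lee_fin => /andP[h1 h2].
    by rewrite ler_norml h1 h2.
  - move: hm; apply: aeS => w h hA; rewrite /cn (indic1 hA) mulr1.
    move: hA; rewrite /An /=; case E: (m w) => [r| |] /= hh.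
    + by rewrite -E.
    + by move: hh; rewrite leye_eq andbF.
    + by [].
pose Bn := [set w | +oo <= m w].
have FB : F t Bn.
  have := mm `[+oo, +oo[%classic (emeasurable_itv _).
  by congr (F t); apply/seteqP; split=> w /=; rewrite in_itv /= andbT.
have H2 n : {ae P, forall w, Bn w -> (n%:R)%:E <= f t X w}.
  apply: (@Lstep X s t Bn (fun _ => n%:R) n%:R) => //.
  - by apply/(GmeasR st).
  - by move=> w; rewrite ger0_norm.
  - move: hm; apply: aeS => w h hB; move: hB h; rewrite /Bn /= leye_eq => /eqP ->.
    by rewrite leye_eq => /eqP ->; rewrite leey.
apply: aeS (aeN (fun n => aeI (H1 n) (H2 n))) => w h.
case E: (m w) => [r| |].
- pose n := (Num.truncn `|r|).+1.
  have hr : (`|r| < n%:R)%R by exact: Num.Theory.truncnS_gt.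
  have hA : An n w.
    rewrite /An /= E !lee_fin; move: hr; rewrite ltr_norml => /andP[a b].
    by rewrite (ltW a) (ltW b).
  have := (h n).1 hA; rewrite /cn (indic1 hA) mulr1 E //.
- have -> : f t X w = +oo.
    by apply: le_natE => n; apply: (h n).2; rewrite /Bn /= E.
  by rewrite leey.
- by rewrite leNye.
Qed.
End hard.
End D.

Section F.
Context {R : realType} {d : measure_display} {T : measurableType d}.
Variable P : probability T R.
Variables (Tend : nat) (F : nat -> set (set T)) (p : Lp_index).
Hypothesis hF : filtration Tend F.

Lemma inLpN G q (X : T -> R) : sigma_algebra setT G -> inLp P G q X ->
  inLp P G q (fun v => - X v)%R.
Proof.
move=> sG [mX hX]; split.
  have := GmeasN sG mX; congr Gmeas; apply: funext => w; by rewrite EFinN.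
case: q hX => // [hX|[C hC]].
  have := integrableN hX; congr (P.-integrable _ _).
by exists C; apply: aeS hC => w; rewrite normrN.
Qed.

Lemma Gmeas0 (G : set (set T)) : sigma_algebra setT G -> Gmeas G (fun _ : T => 0 : \bar R).
Proof. by move=> sG; apply/(GmeasP sG); exact: measurable_cst. Qed.

Lemma c34 (f : nat -> (T -> R) -> (T -> \bar R)) :
  cond3 P Tend F p f -> cond4 P Tend F p f.
Proof.
move=> h X s t hX ts sT h0.
have tT : (t <= Tend)%N by apply: ltnW (leq_trans ts sT).
exact: (h X s t (fun _ => 0) hX ts sT (Gmeas0 (FsG hF tT)) h0).
Qed.

Lemma MUM34 (f : nat -> (T -> R) -> (T -> \bar R)) : dynamic_MUM P Tend F p f ->
  (cond3 P Tend F p f <-> cond4 P Tend F p f).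
Proof.
case=> [[_ Hloc _] Hzero Hcash]; split; first exact: c34.
by move=> h4; apply: (c43 hF Hloc Hzero Hcash h4).
Qed.

Lemma MUM34' (f : nat -> (T -> R) -> (T -> \bar R)) : dynamic_MUM P Tend F p f ->
  (cond3' P Tend F p f <-> cond4' P Tend F p f).
Proof.
case=> [[_ Hloc _] Hzero Hcash].
pose g t X w := - f t (fun v => - X v)%R w.
have sT := FsG hF (leqnn Tend).
have NN (X : T -> R) : (fun v => - - X v)%R = X by apply: funext => v; rewrite opprK.
have e3 : cond3' P Tend F p f <-> cond3 P Tend F p g.
  split=> h X s t m hX ts sT' mm hm.
    have tT : (t <= Tend)%N by apply: ltnW (leq_trans ts sT').
    have hm' : {ae P, forall w, f s (fun v => - X v)%R w <= - m w}.
      by apply: aeS hm => w; rewrite /g leeNr.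
    have := h _ s t _ (inLpN sT hX) ts sT' (GmeasN (FsG hF tT) mm) hm'.
    by apply: aeS => w; rewrite /g leeNr.
  have tT : (t <= Tend)%N by apply: ltnW (leq_trans ts sT').
  have hm' : {ae P, forall w, - m w <= g s (fun v => - X v)%R w}.
    by apply: aeS hm => w; rewrite /g NN leeN2.
  have := h _ s t _ (inLpN sT hX) ts sT' (GmeasN (FsG hF tT) mm) hm'.
  by apply: aeS => w; rewrite /g NN leeN2.
have e4 : cond4' P Tend F p f <-> cond4 P Tend F p g.
  split=> h X s t hX ts sT' h0.
    have h0' : {ae P, forall w, f s (fun v => - X v)%R w <= 0}.
      by apply: aeS h0 => w; rewrite /g oppe_ge0.
    have := h _ s t (inLpN sT hX) ts sT' h0'.
    by apply: aeS => w; rewrite /g oppe_ge0.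
  have h0' : {ae P, forall w, 0 <= g s (fun v => - X v)%R w}.
    by apply: aeS h0 => w; rewrite /g NN oppe_ge0.
  have := h _ s t (inLpN sT hX) ts sT' h0'.
  by apply: aeS => w; rewrite /g NN oppe_ge0.
rewrite e3 e4; split; first exact: c34.
move=> h4; apply: (c43 hF _ _ _ h4).
- move=> t A X tT FA hX; have := Hloc t A _ tT FA (inLpN sT hX).
  apply: aeS => w; rewrite /g !muleN => ->; congr (- (_ * f t _ w)).
  by apply: funext => v; rewrite mulrN.
- move=> t tT; have := Hzero t tT; apply: aeS => w; rewrite /g.
  by rewrite (_ : (fun v => - 0)%R = (fun _ => 0%R)) ?oppr0 // => ->; rewrite oppe0.
- move=> t X c tT hX hc.
  have := Hcash t _ _ tT (inLpN sT hX) (inLpN (FsG hF tT) hc).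
  apply: aeS => w; rewrite /g.
  rewrite (_ : (fun v => - (X v + c v))%R = (fun v => - X v + - c v)%R); last first.
    by apply: funext => v; rewrite opprD.
  move=> ->; rewrite oppeD; first by rewrite EFinN oppeK.
  by rewrite fin_num_adde_defl.
Qed.

End F.

Theorem proposition4p3 (R : realType) (d : measure_display) (T : measurableType d)
  (P : probability T R) (Tend : nat) (F : nat -> set (set T)) (p : Lp_index)
  (phi : nat -> (T -> R) -> (T -> \bar R)) :
  filtration Tend F -> dynamic_LM P Tend F p phi ->
  ((cond1 P Tend F p phi <-> cond2 P Tend F p phi) /\
   (cond2 P Tend F p phi <-> cond3 P Tend F p phi) /\
   (dynamic_MUM P Tend F p phi -> (cond3 P Tend F p phi <-> cond4 P Tend F p phi))) /\
  ((cond1' P Tend F p phi <-> cond2' P Tend F p phi) /\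
   (cond2' P Tend F p phi <-> cond3' P Tend F p phi) /\
   (dynamic_MUM P Tend F p phi -> (cond3' P Tend F p phi <-> cond4' P Tend F p phi))).
Proof.
move=> hF hLM.
have fm : forall X s, inLp P (F Tend) p X -> (s <= Tend)%N -> Gmeas (F s) (phi s X).
  by case: hLM => h _ _ X s hX sT; apply: h.
have [e12 e23] := cond123 hF fm.
have gm : forall X s, inLp P (F Tend) p X -> (s <= Tend)%N ->
    Gmeas (F s) ((fun s X w => - phi s X w) s X).
  by move=> X s hX sT; apply: (GmeasN (FsG hF sT)); exact: fm.
have [g12 g23] := cond123 hF gm.
have [p1 [p2 p3]] := prime123 P p hF phi.
split; split.
- exact: e12.
- split; first exact: e23.
  by move=> hM; apply: MUM34.
- by rewrite p1 p2.
- split; first by rewrite p2 p3.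
  by move=> hM; apply: MUM34'.
Qed.
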